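(* Let $L/K$ be a Galois extension of number fields with Galois group $G=\{\sigma_{g_1},\dots,\sigma_{g_n}\}$ and $R\subseteq S$ the rings of integers. For $1\le l\le n$ let $I_{g_l}=\{\sigma_{g_l},\sigma_{g_{l+1}},\dots,\sigma_{g_n}\}$, and let $P_l=(S\otimes_RS)/(S\otimes_RS)_{I_{g_l}^c}$. Then for $1\le i,j\le n$, $$[(S\otimes_RS)_{I_{g_j}^c}:(S\otimes_RS)_{I_{g_i}^c}]=(S\otimes_RS)_{I_{g_i}\cup I_{g_j}^c},$$ and the map $F:\operatorname{Hom}_{S\otimes_RS}(P_i,P_j)\to(S\otimes_RS)_{I_{g_i}\cup I_{g_j}^c}/(S\otimes_RS)_{I_{g_j}^c}$, $F(f)=f\big(1\otimes1+(S\otimes_RS)_{I_{g_i}^c}\big)$, is an isomorphism of $S\otimes_RS$-modules.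
   Context: $\phi_{g_k}:L\otimes_KL\to L$ is $l_1\otimes l_2\mapsto\sigma_{g_k}(l_1)l_2$, with $S\otimes_RS$ regarded as a subring of $L\otimes_KL$. For $I\subseteq G$, $(S\otimes_RS)_I=\{x\in S\otimes_RS:\phi_{g_k}(x)=0$ for all $k$ with $\sigma_{g_k}\notin I\}$, an ideal of $S\otimes_RS$; $I^c=G\setminus I$. For ideals $I,J$ of a commutative ring $T$, $[J:I]=\{x\in T:xI\subseteq J\}$. *)

(* Defs.v *)
From HB Require Import structures.
From mathcomp Require Import all_boot all_order all_algebra all_fingroup all_field.
Set Implicit Arguments. Unset Strict Implicit. Unset Printing Implicit Defensive.
Import GRing.Theory.
Local Open Scope ring_scope.

Definition integral_Z (A : nzRingType) (x : A) : Prop :=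
  exists p : {poly int}, p \is monic /\ root (map_poly (fun z : int => z%:~R) p) x.

Section Tensor.
Variables (K : fieldType) (L : splittingFieldType K) (n : nat)
          (g : 'I_n -> gal_of {:L}).

(* phi(l1 (x) l2) = (sigma_{g_k}(l1) l2)_k : the isomorphism L (x)_K L ~= L^G,
   with coordinate k being phi_{g_k}. *)
Definition phiT (a b : L) : {ffun 'I_n -> L} := [ffun k => g k a * b].

(* image of S (x)_R S inside L^G: finite sums of phi(a (x) b), a b in S *)
Definition SS (x : {ffun 'I_n -> L}) : Prop :=
  exists s : seq (L * L),
    (forall p, p \in s -> integral_Z p.1 /\ integral_Z p.2) /\
    x = \sum_(p <- s) phiT p.1 p.2.

(* (S (x)_R S)_I, with I a set of indices standing for {sigma_{g_k} | k in I} *)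
Definition SSI (I : {set 'I_n}) (x : {ffun 'I_n -> L}) : Prop :=
  SS x /\ forall k : 'I_n, k \notin I -> x k = 0.

(* I_{g_l} = {sigma_{g_l}, ..., sigma_{g_n}} (0-based index l) *)
Definition Igl (l : 'I_n) : {set 'I_n} := [set k : 'I_n | (l <= k)%N].

Definition colon (J I : {ffun 'I_n -> L} -> Prop) (x : {ffun 'I_n -> L}) : Prop :=
  SS x /\ forall y, I y -> J (x * y).

(* f (acting on representatives) induces an S(x)S-module homomorphism
   (S(x)S)/A -> (S(x)S)/B *)
Definition ishom (A B : {ffun 'I_n -> L} -> Prop)
    (f : {ffun 'I_n -> L} -> {ffun 'I_n -> L}) : Prop :=
  [/\ forall x, SS x -> SS (f x),
      forall x y, SS x -> SS y -> A (x - y) -> B (f x - f y),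
      forall x y, SS x -> SS y -> B (f (x + y) - (f x + f y)) &
      forall t x, SS t -> SS x -> B (f (t * x) - t * f x)].

(* two representatives induce the same homomorphism *)
Definition homeq (B : {ffun 'I_n -> L} -> Prop)
    (f f' : {ffun 'I_n -> L} -> {ffun 'I_n -> L}) : Prop :=
  forall x, SS x -> B (f x - f' x).

End Tensor.

(* Main.v *)
Require Import Defs.
From HB Require Import structures.
From mathcomp Require Import all_boot all_order all_algebra all_fingroup all_field.
Import GRing.Theory Num.Theory.
Local Open Scope ring_scope.
From Stdlib Require Import Classical.

Lemma rat_int_mul (q : {poly rat}) :
  exists d : int, d != 0 /\ forall i, exists e : int, q`_i * d%:~R = e%:~R.
Proof.
exists (\prod_(j < size q) denq q`_j); split.
  by apply/prodf_neq0 => j _; rewrite denq_neq0.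
move=> i; case: (ltnP i (size q)) => [lti|gei]; last first.
  by exists 0; rewrite nth_default // mul0r.
rewrite (bigD1 (Ordinal lti)) //= rmorphM /= mulrA -numqE.
by exists (numq q`_i * \prod_(j < size q | j != Ordinal lti) denq q`_j); rewrite rmorphM.
Qed.

Lemma clear_den (A : comNzRingType) (f : {rmorphism rat -> A}) (q : {poly rat}) (x : A) :
  q \is monic -> root (map_poly f q) x ->
  exists d : int, d != 0 /\ integralOver (intr : int -> A) (d%:~R * x).
Proof.
move=> mq rq.
have [d [dn0 He]] := rat_int_mul q.
exists d; split => //.
have sq : (0 < size q)%N by rewrite size_poly_gt0 monic_neq0.
set m := (size q).-1.
have qm : q`_m = 1 by have := monicP mq; rewrite lead_coefE.
pose r := \poly_(i < size q) (f q`_i * (d%:~R : A) ^+ (m - i)).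
have sr : size r = size q.
  by apply: size_poly_eq; rewrite qm rmorph1 subnn expr0 mulr1 oner_neq0.
apply: (@integral_root_monic _ _ intr _ r).
- by rewrite monicE lead_coefE sr coef_poly -/m ltn_predL sq qm rmorph1 subnn expr0 mulr1.
- rewrite /root horner_poly.
  have -> : \sum_(i < size q) f q`_i * (d%:~R : A) ^+ (m - i) * (d%:~R * x) ^+ i
     = (d%:~R : A) ^+ m * (map_poly f q).[x].
    rewrite (horner_coef_wide _ (eq_leq (size_map_poly _ _))) mulr_sumr.
    apply: eq_bigr => i _; rewrite coef_map exprMn mulrA -(mulrA (f _)) -exprD subnK; last first.
      by rewrite -ltnS /m prednK.
    by rewrite mulrCA mulrA.
  by rewrite (rootP rq) mulr0.
- apply/integral_poly => i; rewrite coef_poly.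
  case: ifP => [lti|_]; last exact: integral0.
  have : (i <= m)%N by rewrite /m -ltnS prednK.
  rewrite leq_eqVlt => /orP[/eqP ->|ltim].
    by rewrite qm rmorph1 subnn expr0 mulr1; apply: integral1.
  rewrite -(subnSK ltim) exprS mulrA.
  have [e He'] := He i.
  have -> : f q`_i * (d%:~R : A) = (e%:~R : A).
    by rewrite -(rmorph_int f d) -rmorphM He' rmorph_int.
  apply: integral_mul; first exact: integral_id.
  rewrite -rmorphXn; exact: integral_id.
Qed.

Lemma intZE (A : nzRingType) (x : A) : integral_Z x <-> integralOver (intr : int -> A) x.
Proof. by split => [[p [mp rp]]|[p mp rp]]; exists p. Qed.

Lemma scale_int (K : fieldExtType rat) (L : splittingFieldType K) (x : L) :
  exists d : int, d != 0 /\ integral_Z (d%:~R * x).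
Proof.
pose B := baseFieldType L.
pose xB : B := x.
have mq := monic_minPoly 1%VS xB.
have rq := root_minPoly 1%VS xB.
have /polyOver1P [q Hq] := minPolyOver 1%VS xB.
have mq' : q \is monic by rewrite -(map_monic (in_alg B)) -Hq.
rewrite Hq in rq.
have [d [dn0 Hd]] := @clear_den B _ _ _ mq' rq.
exists d; split => //; apply/intZE; exact: Hd.
Qed.

Section Helpers.
Variables (K : fieldExtType rat) (L : splittingFieldType K) (n : nat)
          (g : 'I_n -> gal_of {:L}).

Lemma intZ_mul (a b : L) : integral_Z a -> integral_Z b -> integral_Z (a * b).
Proof. by move=> /intZE ha /intZE hb; apply/intZE; apply: integral_mul. Qed.

Lemma intZ_opp (a : L) : integral_Z a -> integral_Z (- a).
Proof. by move=> /intZE ha; apply/intZE; apply: integral_opp. Qed.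

Lemma intZ1 : integral_Z (1 : L).
Proof. by apply/intZE; apply: integral1. Qed.

Lemma intZ_gal (s : gal_of {:L}) (a : L) : integral_Z a -> integral_Z (s a).
Proof.
move=> [p [mp rp]]; exists p; split => //.
have := rmorph_root s rp; rewrite -map_poly_comp.
by rewrite (eq_map_poly (g := fun z : int => z%:~R)) // => z /=; rewrite rmorph_int.
Qed.

Lemma phiTM a b c d : phiT g a b * phiT g c d = phiT g (a * c) (b * d).
Proof. by apply/ffunP => k; rewrite !ffunE rmorphM mulrACA. Qed.

Lemma phiTN a b : - phiT g a b = phiT g (- a) b.
Proof. by apply/ffunP => k; rewrite !ffunE rmorphN mulNr. Qed.

Lemma SS0 : SS g 0.
Proof. by exists [::]; rewrite big_nil. Qed.

Lemma SS_phi a b : integral_Z a -> integral_Z b -> SS g (phiT g a b).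
Proof.
move=> ha hb; exists [:: (a, b)]; rewrite big_seq1; split => //.
by move=> p; rewrite inE => /eqP ->.
Qed.

Lemma phiT11 : phiT g 1 1 = 1.
Proof. by apply/ffunP => k; rewrite !ffunE rmorph1 mulr1. Qed.

Lemma SS1 : SS g 1.
Proof. by rewrite -phiT11; apply: SS_phi; apply: intZ1. Qed.

Lemma SSD x y : SS g x -> SS g y -> SS g (x + y).
Proof.
move=> [s1 [h1 ->]] [s2 [h2 ->]]; exists (s1 ++ s2); rewrite big_cat; split => //.
by move=> p; rewrite mem_cat => /orP[/h1|/h2].
Qed.

Lemma SSN x : SS g x -> SS g (- x).
Proof.
move=> [s [h ->]]; exists [seq (- p.1, p.2) | p <- s]; split.
  move=> p /mapP [q /h [h1 h2] ->] /=; split => //; exact: intZ_opp.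
by rewrite big_map -sumrN; apply: eq_bigr => p _; rewrite phiTN.
Qed.

Lemma SSB x y : SS g x -> SS g y -> SS g (x - y).
Proof. by move=> hx hy; apply: SSD => //; apply: SSN. Qed.

Lemma SS_sum (T : eqType) (s : seq T) (F : T -> {ffun 'I_n -> L}) :
  (forall t, t \in s -> SS g (F t)) -> SS g (\sum_(t <- s) F t).
Proof.
elim: s => [|t s IH] h; first by rewrite big_nil; apply: SS0.
rewrite big_cons; apply: SSD; first by apply: h; rewrite inE eqxx.
by apply: IH => u hu; apply: h; rewrite inE hu orbT.
Qed.

Lemma SSM x y : SS g x -> SS g y -> SS g (x * y).
Proof.
move=> [s1 [h1 ->]] [s2 [h2 ->]]; rewrite mulr_suml; apply: SS_sum => p /h1 [hp1 hp2].
rewrite mulr_sumr; apply: SS_sum => q /h2 [hq1 hq2].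
by rewrite phiTM; apply: SS_phi; apply: intZ_mul.
Qed.

Lemma SSI0 (I : {set 'I_n}) : SSI g I 0.
Proof. by split; [apply: SS0 | move=> k _; rewrite ffunE]. Qed.

Hypothesis Hg_inj : injective g.

Lemma sep1 (m k : 'I_n) : m != k -> exists a, integral_Z a /\ g m a != g k a.
Proof.
move=> mk; apply: NNPP => H.
have Ha : forall a, integral_Z a -> g m a = g k a.
  by move=> a ha; apply/eqP; apply/negP => ne; apply: H; exists a; split => //; apply/negP.
have : g m == g k.
  apply/gal_eqP => x _.
  have [d [dn0 hd]] := @scale_int K L x.
  have := Ha _ hd; rewrite !rmorphM /= !rmorph_int.
  apply: mulfI.
  pose B := baseFieldType L.
  have -> : (d%:~R : L) = in_alg B (d%:~R : rat) by rewrite rmorph_int.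
  by rewrite -(rmorph0 (in_alg B)) (inj_eq (fmorph_inj (in_alg B))) intr_eq0.
by move/eqP/Hg_inj/eqP; rewrite (negbTE mk).
Qed.

Lemma sep (k : 'I_n) (s : seq 'I_n) : k \notin s ->
  exists y, SS g y /\ y k != 0 /\ forall m, m \in s -> y m = 0.
Proof.
elim: s => [|m s IH].
  move=> _; exists 1; split; first exact: SS1.
  by split => //; rewrite ffunE oner_neq0.
rewrite inE negb_or => /andP [km /IH [y [SSy [yk ys]]]].
have mk : m != k by rewrite eq_sym.
have [a [ha gma]] := @sep1 m k mk.
exists (y * (phiT g a 1 - phiT g 1 (g m a))); split.
  apply: SSM => //; apply: SSB; apply: SS_phi => //; try exact: intZ1.
  exact: intZ_gal.
split.
  rewrite !ffunE rmorph1 mul1r mulr1 mulf_neq0 //.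
  by rewrite subr_eq0 eq_sym.
move=> m'; rewrite inE => /orP [/eqP ->|hm'].
  by rewrite !ffunE rmorph1 mul1r mulr1 subrr mulr0.
by rewrite !ffunE ys // mul0r.
Qed.

End Helpers.
Theorem mainTheorem12
  (K : fieldExtType rat) (L : splittingFieldType K)
  (HGal : galois (1%VS : {vspace L}) fullv)
  (n : nat) (g : 'I_n -> gal_of {:L})
  (Hg_in : forall k, g k \in 'Gal({:L} / 1%VS)%g)
  (Hg_inj : injective g)
  (Hg_onto : forall s, s \in 'Gal({:L} / 1%VS)%g -> exists k, g k = s)
  (i j : 'I_n) :
  (forall x, colon g (SSI g (~: Igl j)) (SSI g (~: Igl i)) x
             <-> SSI g (Igl i :|: ~: Igl j) x)
  /\
  [/\ (* F is well defined: F(f) = f(1 (x) 1 + ...) lies in (S(x)S)_{I_i u I_j^c} *)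
      forall f, ishom g (SSI g (~: Igl i)) (SSI g (~: Igl j)) f ->
        SSI g (Igl i :|: ~: Igl j) (f 1),
      (* F only depends on the homomorphism, not on the representative *)
      forall f f', ishom g (SSI g (~: Igl i)) (SSI g (~: Igl j)) f ->
        ishom g (SSI g (~: Igl i)) (SSI g (~: Igl j)) f' ->
        homeq g (SSI g (~: Igl j)) f f' -> SSI g (~: Igl j) (f 1 - f' 1),
      (* F is injective *)
      forall f f', ishom g (SSI g (~: Igl i)) (SSI g (~: Igl j)) f ->
        ishom g (SSI g (~: Igl i)) (SSI g (~: Igl j)) f' ->
        SSI g (~: Igl j) (f 1 - f' 1) -> homeq g (SSI g (~: Igl j)) f f' &
      (* F is surjective *)
      forall c, SSI g (Igl i :|: ~: Igl j) c ->
        exists f, ishom g (SSI g (~: Igl i)) (SSI g (~: Igl j)) f /\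
                  SSI g (~: Igl j) (f 1 - c)].
Proof.
have inI : forall (l k : 'I_n), (k \in Igl l) = (l <= k)%N by move=> l k; rewrite inE.
have nz : forall k : 'I_n, k \notin Igl i ->
    exists y, SS g y /\ y k != 0 /\ SSI g (~: Igl i) y.
  move=> k hk.
  have [|y [SSy [yk ys]]] := @sep K L n g Hg_inj k (enum (Igl i)); first by rewrite mem_enum.
  exists y; split => //; split => //; split => // m; rewrite in_setC negbK => hm.
  by apply: ys; rewrite mem_enum.
have cU : forall k : 'I_n, (k \in Igl i :|: ~: Igl j) = (k \in Igl i) || (k \notin Igl j).
  by move=> k; rewrite in_setU in_setC.
split.
  move=> x; split.
    move=> [SSx Hx]; split => // k; rewrite cU negb_or negbK => /andP [ki kj].
    have [y [SSy [yk Ay]]] := nz k ki.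
    have [_ /(_ k)] := Hx y Ay; rewrite in_setC kj ffunE => /(_ isT) /eqP.
    by rewrite mulf_eq0 (negbTE yk) orbF => /eqP.
  move=> [SSx Hx]; split => // y [SSy Hy]; split; first exact: SSM.
  move=> k; rewrite in_setC negbK => kj; rewrite ffunE.
  case ki: (k \in Igl i).
    by rewrite Hy ?mulr0 // in_setC ki.
  by rewrite Hx ?mul0r // cU ki kj.
split.
- move=> f [Hss Hw Hadd Hlin]; split; first exact: Hss (@SS1 K L n g).
  move=> k; rewrite cU negb_or negbK => /andP [ki kj].
  have [y [SSy [yk Ay]]] := nz k ki.
  have kj' : k \notin ~: Igl j by rewrite in_setC negbK.
  have f0 : f 0 k = 0.
    have [_ /(_ k kj')] := Hadd 0 0 (@SS0 K L n g) (@SS0 K L n g).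
    rewrite addr0 !ffunE => /eqP; rewrite opprD addrA subrr add0r oppr_eq0 => /eqP //.
  have fy : f y k = 0.
    have [_ /(_ k kj')] := Hw y 0 SSy (@SS0 K L n g) (ltac:(by rewrite subr0)).
    by rewrite !ffunE f0 subr0.
  have [_ /(_ k kj')] := Hlin y 1 SSy (@SS1 K L n g).
  rewrite mulr1 !ffunE fy sub0r => /eqP; rewrite oppr_eq0 mulf_eq0 (negbTE yk) /= => /eqP //.
- by move=> f f' _ _ H; apply: H; apply: SS1.
- move=> f f' [Hss Hw Hadd Hlin] [Hss' Hw' Hadd' Hlin'] [_ Hd] x SSx; split.
    by apply: SSB; [apply: Hss | apply: Hss'].
  move=> k kj.
  have [_ e1] := Hlin x 1 SSx (@SS1 K L n g).
  have [_ e2] := Hlin' x 1 SSx (@SS1 K L n g).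
  move: (e1 k kj) (e2 k kj) (Hd k kj).
  rewrite !mulr1 !ffunE => /eqP; rewrite subr_eq0 => /eqP -> /eqP; rewrite subr_eq0 => /eqP ->.
  by move=> h; rewrite -mulrBr h mulr0.
- move=> c [SSc Hc]; exists (fun x => x * c); split; last first.
    by rewrite mul1r (_ : c - c = 0) ?subrr //; apply: SSI0.
  split.
  + by move=> x SSx; apply: SSM.
  + move=> x y SSx SSy [_ Hxy]; split; first by apply: SSB; apply: SSM.
    move=> k; rewrite in_setC negbK => kj.
    case ki: (k \in Igl i).
      have := Hxy k; rewrite in_setC ki !ffunE => /(_ isT) e.
      by rewrite -mulrBl e mul0r.
    by rewrite !ffunE Hc ?mulr0 ?subrr // cU ki kj.
  + by move=> x y _ _; rewrite mulrDl subrr; apply: SSI0.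
  + by move=> t x _ _; rewrite mulrA subrr; apply: SSI0.
Qed.
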